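(* Let $n \in \mathbb{N}$ and $M,N \in \mathcal{M}_n(\mathbb{C})$. Let $P_\perp$ denote the orthogonal projection of $\mathbb{C}^{2n}$ onto $\left[\mathcal{R}\begin{pmatrix} N \\ \overline{M}\end{pmatrix}\right]^{\perp}$, where $\begin{pmatrix} N \\ \overline{M}\end{pmatrix}$ is the $2n\times n$ complex matrix obtained by stacking $N$ on top of $\overline{M}$. The following are equivalent: \begin{enumerate} \item $\{ z \in \mathbb{C}^n \mid Mz + N\bar{z} = 0\}$ is a complex vector subspace of $\mathbb{C}^n$ (i.e. it is closed under multiplication by $i$). \item The (real-linear) map $\mathbb{C}^n \to \mathbb{C}^{2n}$, $z \mapsto P_\perp \begin{pmatrix} z \\ \bar z\end{pmatrix}$, is injective. \item There exist $U,V \in \mathcal{M}_n(\mathbb{C})$ such that for every $p \in \mathcal{R}(M,N)$, $$\{ z \in \mathbb{C}^n \mid Mz + N\bar z = p\} = \{ z \in \mathbb{C}^n \mid (UM + V\overline{N})z = Up + V\overline{p}\}.$$ \end{enumerate}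
   Context: $\mathcal{M}_n(\mathbb{C})$ is the set of $n\times n$ complex matrices; $\bar z$, $\overline{M}$ denote entrywise complex conjugation. $\mathbb{C}^{2n}$ is equipped with the Hermitian inner product $\langle u,v\rangle = \sum_{k=1}^{2n} u_k \bar v_k$, and $\perp$ denotes the orthogonal complement with respect to it. $\mathcal{R}(X)$ denotes the range (column space) of a matrix $X$. The range of the system is $\mathcal{R}(M,N) := \{ p \in \mathbb{C}^n \mid \exists z \in \mathbb{C}^n : Mz + N\bar z = p\}$. *)

(* Defs.v *)
From HB Require Import structures.
From mathcomp Require Import all_boot all_order all_algebra.
Set Implicit Arguments. Unset Strict Implicit. Unset Printing Implicit Defensive.
Import Order.TTheory GRing.Theory Num.Theory Num.Def.
Local Open Scope ring_scope.

Definition conjm (C : numClosedFieldType) (m n : nat) (A : 'M[C]_(m, n)) : 'M[C]_(m, n) :=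
  map_mx conjC A.

Definition hdot (C : numClosedFieldType) (m : nat) (u v : 'cV[C]_m) : C :=
  \sum_(k < m) u k 0 * conjC (v k 0).

Definition in_range_perp (C : numClosedFieldType) (m n : nat)
  (A : 'M[C]_(m, n)) (v : 'cV[C]_m) : Prop :=
  forall x : 'cV[C]_n, hdot v (A *m x) = 0.

Definition is_orth_proj_range_perp (C : numClosedFieldType) (m n : nat)
  (A : 'M[C]_(m, n)) (P : 'M[C]_m) : Prop :=
  forall v : 'cV[C]_m,
    in_range_perp A (P *m v) /\
    (forall w : 'cV[C]_m, in_range_perp A w -> hdot (v - P *m v) w = 0).

Definition sol_set (C : numClosedFieldType) (n : nat) (M N : 'M[C]_n)
  (p : 'cV[C]_n) (z : 'cV[C]_n) : Prop :=
  M *m z + N *m conjm z = p.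

Definition range_MN (C : numClosedFieldType) (n : nat) (M N : 'M[C]_n)
  (p : 'cV[C]_n) : Prop :=
  exists z : 'cV[C]_n, M *m z + N *m conjm z = p.

Definition complex_subspace (C : numClosedFieldType) (n : nat)
  (S : 'cV[C]_n -> Prop) : Prop :=
  S 0 /\ forall (a : C) (z w : 'cV[C]_n), S z -> S w -> S (a *: z + w).

(* Main.v *)
Require Import Defs.
From HB Require Import structures.
From mathcomp Require Import all_boot all_order all_algebra.
Import Order.TTheory GRing.Theory Num.Theory Num.Def.
Local Open Scope ring_scope.

Lemma conjmM (C : numClosedFieldType) m n p (A : 'M[C]_(m,n)) (B : 'M[C]_(n,p)) :
  conjm (A *m B) = conjm A *m conjm B.
Proof. by rewrite /conjm map_mxM. Qed.
Lemma conjmK (C : numClosedFieldType) m n (A : 'M[C]_(m,n)) : conjm (conjm A) = A.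
Proof. by apply/matrixP => i j; rewrite !mxE conjCK. Qed.
Lemma conjmD (C : numClosedFieldType) m n (A B : 'M[C]_(m,n)) :
  conjm (A + B) = conjm A + conjm B.
Proof. by apply/matrixP => i j; rewrite !mxE rmorphD. Qed.
Lemma conjmN (C : numClosedFieldType) m n (A : 'M[C]_(m,n)) :
  conjm (- A) = - conjm A.
Proof. by apply/matrixP => i j; rewrite !mxE rmorphN. Qed.
Lemma conjmB (C : numClosedFieldType) m n (A B : 'M[C]_(m,n)) :
  conjm (A - B) = conjm A - conjm B.
Proof. by rewrite conjmD conjmN. Qed.
Lemma conjmZ (C : numClosedFieldType) m n (a : C) (A : 'M[C]_(m,n)) :
  conjm (a *: A) = a^* *: conjm A.
Proof. by apply/matrixP => i j; rewrite !mxE rmorphM. Qed.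
Lemma conjm0 (C : numClosedFieldType) m n : conjm (0 : 'M[C]_(m,n)) = 0.
Proof. by apply/matrixP => i j; rewrite !mxE rmorph0. Qed.

Lemma two_i_neq0 (C : numClosedFieldType) : (2%:R * 'i : C) != 0.
Proof. by rewrite mulf_neq0 ?neq0Ci // pnatr_eq0. Qed.

Lemma key1 (C : numClosedFieldType) n (M N : 'M[C]_n) :
  complex_subspace (sol_set M N 0) <-> (forall z : 'cV[C]_n, sol_set M N 0 z -> M *m z = 0).
Proof.
split.
- move=> [H0 Hl] z Sz.
  have Siz := Hl 'i z 0 Sz H0; rewrite addr0 /sol_set in Siz.
  move: Sz; rewrite /sol_set => Sz.
  rewrite conjmZ conjCi -!scalemxAr in Siz.
  have e : N *m conjm z = - (M *m z) by apply/eqP; rewrite -addr_eq0 addrC Sz.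
  rewrite e scaleNr scalerN opprK -scalerDl in Siz.
  move/eqP: Siz; rewrite scaler_eq0 => /orP[|/eqP //].
  by rewrite -mulr2n -mulr_natl (negbTE (two_i_neq0 C)).
- move=> H; split; first by rewrite /sol_set conjm0 !mulmx0 addr0.
  move=> a z w Sz Sw.
  have Mz := H z Sz.
  have Nz : N *m conjm z = 0 by move: Sz; rewrite /sol_set Mz add0r.
  rewrite /sol_set conjmD conjmZ !mulmxDr -!scalemxAr Mz Nz !scaler0 !add0r.
  exact: Sw.
Qed.

Lemma key2 (C : numClosedFieldType) n (M N : 'M[C]_n) :
  (forall z : 'cV[C]_n, sol_set M N 0 z -> M *m z = 0) <->
  (forall x : 'cV[C]_n, N *m x = M *m conjm x -> N *m x = 0).
Proof.
split.
- move=> H x e.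
  have Sz : sol_set M N 0 ('i *: conjm x).
    by rewrite /sol_set conjmZ conjmK conjCi -!scalemxAr e scaleNr addrN.
  have := H _ Sz; rewrite -scalemxAr => /eqP; rewrite scaler_eq0 (negbTE (neq0Ci C)) /=.
  by move/eqP => h; rewrite e h.
- move=> H z Sz.
  have e : N *m conjm z = - (M *m z) by apply/eqP; rewrite -addr_eq0 addrC Sz.
  have h := H (- 'i *: conjm z).
  have ci : conjC (- 'i) = 'i :> C by rewrite rmorphN /= conjCi opprK.
  rewrite conjmZ conjmK ci -!scalemxAr e in h.
  rewrite scaleNr scalerN opprK in h.
  have := h erefl => /eqP; rewrite scaler_eq0 (negbTE (neq0Ci C)) /=.
  by move/eqP.
Qed.

Lemma hdotC (C : numClosedFieldType) m (u v : 'cV[C]_m) : hdot u v = (hdot v u)^*.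
Proof.
rewrite /hdot rmorph_sum; apply: eq_bigr => k _.
by rewrite rmorphM /= conjCK mulrC.
Qed.

Lemma hdotBl (C : numClosedFieldType) m (u u' w : 'cV[C]_m) :
  hdot (u - u') w = hdot u w - hdot u' w.
Proof. by rewrite /hdot -sumrB; apply: eq_bigr => k _; rewrite !mxE mulrBl. Qed.

Lemma hdot_eq0 (C : numClosedFieldType) m (u : 'cV[C]_m) : hdot u u = 0 -> u = 0.
Proof.
move=> h; apply/matrixP => i j; rewrite (ord1 j) mxE.
have := psumr_eq0P (fun k _ => mul_conjC_ge0 (u k 0)) h (i := i) erefl.
by move/eqP; rewrite mul_conjC_eq0 => /eqP.
Qed.

Lemma proj_range0 (C : numClosedFieldType) m k (A : 'M[C]_(m, k)) (P : 'M[C]_m)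
  (hP : is_orth_proj_range_perp A P) (x : 'cV[C]_k) : P *m (A *m x) = 0.
Proof.
have [h1 h2] := hP (A *m x).
have e := h2 _ h1.
rewrite hdotBl (@hdotC _ _ (A *m x)) (h1 x) conjC0 sub0r in e.
by apply: hdot_eq0; move/eqP: e; rewrite oppr_eq0 => /eqP.
Qed.

Lemma proj_range0_inv (C : numClosedFieldType) m k (A : 'M[C]_(m, k)) (P : 'M[C]_m)
  (hP : is_orth_proj_range_perp A P) (v : 'cV[C]_m) :
  P *m v = 0 -> exists x : 'cV[C]_k, v = A *m x.
Proof.
move=> Pv0; have [_ h2] := hP v; rewrite Pv0 subr0 in h2.
suff : (v^T <= A^T)%MS.
  by case/submxP => D eD; exists D^T; rewrite -[v]trmxK eD trmx_mul trmxK.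
rewrite submxE; apply/eqP/matrixP => i j; rewrite (ord1 i) !mxE.
set K := cokermx A^T.
have perp : in_range_perp A (\col_k (K k j)^*).
  move=> y; rewrite /hdot.
  have : ((A *m y)^T *m K) 0 j = 0 by rewrite trmx_mul -mulmxA mulmx_coker mulmx0 mxE.
  rewrite mxE => e; transitivity (conjC (\sum_l (A *m y)^T 0 l * K l j)); last by rewrite e conjC0.
  rewrite rmorph_sum; apply: eq_bigr => l _.
  by rewrite !mxE rmorphM /= mulrC.
have := h2 _ perp; rewrite /hdot => e; rewrite -[RHS]e; apply: eq_bigr => l _.
by rewrite !mxE conjCK.
Qed.

Lemma solK (C : numClosedFieldType) n (M N : 'M[C]_n) z :
  M *m z = 0 -> sol_set M N 0 z -> N *m conjm z = 0.
Proof. by move=> Mz; rewrite /sol_set Mz add0r. Qed.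

Lemma cap0 (C : numClosedFieldType) n (M N : 'M[C]_n)
  (HK : forall z : 'cV[C]_n, sol_set M N 0 z -> M *m z = 0) :
  (<<(col_mx M (conjm N))^T>> :&: <<(col_mx N (conjm M))^T>> = 0)%MS.
Proof.
apply/eqP/rowV0P => v; rewrite sub_capmx !genmxE.
case/andP => /submxP[a ->] /submxP[b eab].
have e : col_mx M (conjm N) *m a^T = col_mx N (conjm M) *m b^T.
  by move/(congr1 trmx): eab; rewrite !trmx_mul !trmxK.
rewrite !mul_col_mx in e; case/eq_col_mx: e => e1 e2.
set a' := a^T in e1 e2 *; set b' := b^T in e1 e2 *.
have e2' : N *m conjm a' = M *m conjm b'.
  by move/(congr1 (@conjm C _ _)): e2; rewrite !conjmM !conjmK.
have S1 : sol_set M N 0 (a' - conjm b').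
  by rewrite /sol_set conjmB conjmK !mulmxBr e1 e2' addrA subrK subrr.
have S2 : sol_set M N 0 ('i *: (a' + conjm b')).
  rewrite /sol_set conjmZ conjCi conjmD conjmK -!scalemxAr !mulmxDr e1 e2'.
  by rewrite scaleNr [N *m b' + _]addrC subrr.
have q1 := HK _ S1; rewrite mulmxBr e1 -e2' in q1.
have q2 := HK _ S2; rewrite -scalemxAr mulmxDr e1 -e2' in q2.
move/eqP: q2; rewrite scaler_eq0 (negbTE (neq0Ci C)) /= => /eqP q2.
have r0 : N *m conjm a' = 0.
  move/eqP: q1; rewrite subr_eq0 => /eqP q1.
  move: q2; rewrite q1 -mulr2n => /eqP; rewrite -scaler_nat scaler_eq0 pnatr_eq0 /=.
  by move/eqP.
have q0 : N *m b' = 0 by move/eqP: q1; rewrite r0 subr0 => /eqP.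
have X0 : col_mx M (conjm N) *m a' = 0.
  rewrite mul_col_mx e1 q0.
  have -> : conjm N *m a' = conjm (N *m conjm a') by rewrite conjmM conjmK.
  by rewrite r0 conjm0 col_mx0.
by rewrite -[a *m _]trmxK trmx_mul trmxK X0 trmx0.
Qed.

Lemma construct (C : numClosedFieldType) n (M N : 'M[C]_n)
  (HK : forall z : 'cV[C]_n, sol_set M N 0 z -> M *m z = 0) :
  exists U V : 'M[C]_n, U *m N + V *m conjm M = 0 /\
    forall d : 'cV[C]_n, (U *m M + V *m conjm N) *m d = 0 ->
      M *m d = 0 /\ conjm N *m d = 0.
Proof.
set X := col_mx M (conjm N); set Y := col_mx N (conjm M).
have cap := @cap0 C n M N HK.
set Pr := proj_mx <<X^T>>%MS <<Y^T>>%MS.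
set W := (Pr *m pinvmx X^T)^T.
exists (lsubmx W), (rsubmx W); split.
  rewrite -mul_row_col hsubmxK -[LHS]trmxK trmx_mul /W trmxK mulmxA.
  by rewrite proj_mx_0 ?mul0mx ?trmx0 // genmxE submx_refl.
move=> d; rewrite -mul_row_col hsubmxK => hd.
have hX : X *m d = 0.
  have h : d^T *m X^T *m Pr *m pinvmx X^T = 0.
    by move/(congr1 trmx): hd; rewrite trmx0 !trmx_mul /W trmxK !mulmxA.
  rewrite proj_mx_id // ?genmxE ?submxMl // in h.
  have := mulmxKpV (submxMl d^T X^T); rewrite h mul0mx => h0.
  by rewrite -[LHS]trmxK trmx_mul -h0 trmx0.
by move: hX; rewrite mul_col_mx -col_mx0 => /eq_col_mx.
Qed.

Theorem proposition1 (C : numClosedFieldType) (n : nat) (M N : 'M[C]_n)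
  (Pperp : 'M[C]_(n + n))
  (hP : is_orth_proj_range_perp (col_mx N (conjm M)) Pperp) :
  [<-> complex_subspace (sol_set M N 0);
       (forall z w : 'cV[C]_n,
          Pperp *m col_mx z (conjm z) = Pperp *m col_mx w (conjm w) -> z = w);
       exists U V : 'M[C]_n,
         forall p : 'cV[C]_n, range_MN M N p ->
           forall z : 'cV[C]_n,
             sol_set M N p z <->
             (U *m M + V *m conjm N) *m z = U *m p + V *m conjm p].
Proof.
have K1 := @key1 C n M N; have K2 := @key2 C n M N.
have c22 : (forall z w : 'cV[C]_n,
          Pperp *m col_mx z (conjm z) = Pperp *m col_mx w (conjm w) -> z = w) <->
           (forall x : 'cV[C]_n, N *m x = M *m conjm x -> N *m x = 0).
  split.
  - move=> H x e; apply: H.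
    have -> : col_mx (N *m x) (conjm (N *m x)) = col_mx N (conjm M) *m x.
      by rewrite mul_col_mx e conjmM conjmK.
    by rewrite (@proj_range0 _ _ _ _ _ hP) conjm0 col_mx0 mulmx0.
  - move=> H z w e; apply/eqP; rewrite -subr_eq0; apply/eqP.
    have h : Pperp *m col_mx (z - w) (conjm (z - w)) = 0.
      by rewrite conjmB -add_col_mx -opp_col_mx mulmxBr e subrr.
    have [x] := @proj_range0_inv _ _ _ _ _ hP _ h.
    rewrite mul_col_mx => /eq_col_mx [ex1 ex2].
    have ex2' : z - w = M *m conjm x.
      by move/(congr1 (@conjm C _ _)): ex2; rewrite conjmK conjmM conjmK.
    by rewrite ex1 H // -ex1.
split.
  by move=> H1; apply/c22/K2/K1.
split.
  move=> H2; have HK := (proj2 K2) ((proj1 c22) H2).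
  have [U [V [UV0 Hd]]] := @construct C n M N HK.
  exists U, V => p [z0 ez0] z.
  have idE : forall y : 'cV[C]_n, U *m (M *m y + N *m conjm y) + V *m conjm (M *m y + N *m conjm y)
      = (U *m M + V *m conjm N) *m y.
    move=> y; rewrite conjmD !conjmM conjmK !mulmxDr !mulmxDl !mulmxA.
    have h0 : U *m N *m conjm y + V *m conjm M *m conjm y = 0 by rewrite -mulmxDl UV0 mul0mx.
    by rewrite -addrA (addrA (U *m N *m _)) h0 add0r.
  split.
    by rewrite /sol_set => <-; rewrite idE.
  rewrite -ez0 idE => e.
  have [hM hN] : M *m (z - z0) = 0 /\ conjm N *m (z - z0) = 0.
    by apply: Hd; rewrite mulmxBr e subrr.
  have hN' : N *m conjm (z - z0) = 0.
    by rewrite -[LHS]conjmK conjmM conjmK hN conjm0.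
  apply/eqP; rewrite /sol_set -subr_eq0; apply/eqP.
  move: hM hN'; rewrite mulmxBr conjmB mulmxBr => hM hN'.
  by rewrite opprD addrACA hM hN' addr0.
move=> [U [V H3]].
have R0 : range_MN M N 0 by exists 0; rewrite conjm0 !mulmx0 addr0.
have E : forall z, sol_set M N 0 z <-> (U *m M + V *m conjm N) *m z = 0.
  by move=> z; have := H3 0 R0 z; rewrite conjm0 !mulmx0 addr0.
split; first by apply/E; rewrite mulmx0.
move=> a z w /E hz /E hw; apply/E.
by rewrite mulmxDr -scalemxAr hz hw scaler0 add0r.
Qed.
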